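(* Let $A\| B$ be a right D2 extension and $\mathcal E=\mathrm{End}({}_BA)$. Then $\Psi:A\otimes_BA\to\mathrm{Hom}(\mathcal E_A,A_A)$, $\Psi(a\otimes a')(f)=af(a')$, is an isomorphism of left $B$-modules, with inverse $F\mapsto\sum_jF(\gamma_j)u_j^1\otimes u_j^2$ for any right D2 quasibase $\gamma_j,u_j$. Here $\mathcal E$ is a right $A$-module via $(f\cdot a)(x)=f(x)a$, and $\mathrm{Hom}(\mathcal E_A,A_A)$ is a left $B$-module via $(bF)(f)=bF(f)$.
   Context: Algebras over a commutative ring $K$; $A\| B$ a unit-preserving algebra homomorphism $B\to A$; $S=\mathrm{End}({}_BA_B)$; $T=(A\otimes_BA)^B$ with Sweedler notation $t=t^1\otimes t^2$. $A\| B$ is right D2 if $A\otimes_BA$ is isomorphic as an $A$-$B$-bimodule to a direct summand of some $A^n$; equivalently there are finitely many $\gamma_j\in S,u_j\in T$ with $a\otimes_Ba'=\sum_ja\gamma_j(a')u_j^1\otimes u_j^2$ for all $a,a'$ (right D2 quasibase). *)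

(* Defs.v *)
From HB Require Import structures.
From mathcomp Require Import all_boot all_order all_algebra.
Set Implicit Arguments. Unset Strict Implicit. Unset Printing Implicit Defensive.
Import GRing.Theory.
Local Open Scope ring_scope.

Definition additive_map (U V : zmodType) (h : U -> V) :=
  forall x y, h (x + y) = h x + h y.

Section D2.
Variables (K : comNzRingType) (A B : algType K) (iota : {lrmorphism B -> A}).

Definition balanced_map (N : zmodType) (phi : A -> A -> N) :=
  [/\ forall a1 a2 a', phi (a1 + a2) a' = phi a1 a' + phi a2 a',
      forall a a1' a2', phi a (a1' + a2') = phi a a1' + phi a a2'
    & forall a b a', phi (a * iota b) a' = phi a (iota b * a')].

(* (M, tens) is the tensor product A (x)_B A, given by its universal property. *)
Definition is_tensor_BA (M : zmodType) (tens : A -> A -> M) :=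
  [/\ balanced_map tens,
      forall (N : zmodType) (phi : A -> A -> N), balanced_map phi ->
        exists h : M -> N, additive_map h /\ forall a a', h (tens a a') = phi a a'
    & forall (N : zmodType) (h1 h2 : M -> N), additive_map h1 -> additive_map h2 ->
        (forall a a', h1 (tens a a') = h2 (tens a a')) -> forall t, h1 t = h2 t].

Definition left_A_action (M : zmodType) (tens : A -> A -> M) (lact : A -> M -> M) :=
  (forall x, additive_map (lact x)) /\
  forall x a a', lact x (tens a a') = tens (x * a) a'.

Definition right_B_action (M : zmodType) (tens : A -> A -> M) (ract : M -> B -> M) :=
  (forall b, additive_map (fun t => ract t b)) /\
  forall b a a', ract (tens a a') b = tens a (a' * iota b).

Definition End_B (f : A -> A) :=
  additive_map f /\ forall b x, f (iota b * x) = iota b * f x.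

Definition End_BB (g : A -> A) :=
  [/\ additive_map g, forall b x, g (iota b * x) = iota b * g x
    & forall b x, g (x * iota b) = g x * iota b].

Definition in_T (M : zmodType) (lact : A -> M -> M) (ract : M -> B -> M) (t : M) :=
  forall b, lact (iota b) t = ract t b.

Definition Hom_EA (F : (A -> A) -> A) :=
  (forall f g, End_B f -> End_B g -> F (fun x => f x + g x) = F f + F g) /\
  (forall f a, End_B f -> F (fun x => f x * a) = F f * a).

(* right D2: A (x)_B A is isomorphic as A-B-bimodule to a direct summand of A^n *)
Definition right_D2 (M : zmodType) (lact : A -> M -> M) (ract : M -> B -> M) :=
  exists n (i : M -> 'I_n -> A) (p : ('I_n -> A) -> M),
    [/\ forall t t' k, i (t + t') k = i t k + i t' k,
        forall x t k, i (lact x t) k = x * i t k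
      & forall b t k, i (ract t b) k = i t k * iota b] /\
    [/\ forall v w, p (fun k => v k + w k) = p v + p w,
        forall x v, p (fun k => x * v k) = lact x (p v),
        forall b v, p (fun k => v k * iota b) = ract (p v) b
      & forall t, p (i t) = t].

Definition right_D2_quasibase (M : zmodType) (tens : A -> A -> M)
  (lact : A -> M -> M) (ract : M -> B -> M) (n : nat)
  (gamma : 'I_n -> A -> A) (u : 'I_n -> M) :=
  [/\ forall j, End_BB (gamma j),
      forall j, in_T lact ract (u j)
    & forall a a', tens a a' = \sum_(j < n) lact (a * gamma j a') (u j)].

End D2.

(* Main.v *)
From Stdlib Require Import FunctionalExtensionality.
Require Import Defs.
From HB Require Import structures.
From mathcomp Require Import all_boot all_order all_algebra.
Import GRing.Theory.
Local Open Scope ring_scope.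

Lemma addm0 (U V : zmodType) (h : U -> V) : additive_map h -> h 0 = 0.
Proof.
move=> H; have := H 0 0; rewrite addr0 -{1}[h 0]addr0 => /addrI; by move=> <-.
Qed.

Lemma addm_sum (U V : zmodType) (h : U -> V) (I : Type) (s : seq I) (F : I -> U) :
  additive_map h -> h (\sum_(j <- s) F j) = \sum_(j <- s) h (F j).
Proof.
move=> H; elim: s => [|i s IH]; first by rewrite !big_nil (@addm0 _ _ _ H).
by rewrite !big_cons H IH.
Qed.

Lemma fun_sum (X : Type) (V Y : zmodType) (h : (X -> V) -> Y)
  (Hadd : forall v w, h (fun k => v k + w k) = h v + h w)
  (I : Type) (s : seq I) (W : I -> X -> V) :
  h (fun k => \sum_(j <- s) W j k) = \sum_(j <- s) h (W j).
Proof.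
have h0 : h (fun _ => 0) = 0.
  have := Hadd (fun _ => 0) (fun _ => 0).
  have -> : (fun _ : X => (0:V) + 0) = (fun _ => 0).
    by apply: functional_extensionality => x; rewrite addr0.
  rewrite -{1}[h (fun _ => 0)]addr0 => /addrI; by move=> <-.
elim: s => [|i s IH].
  rewrite big_nil -h0; congr h; apply: functional_extensionality => x; by rewrite big_nil.
rewrite big_cons -IH -Hadd; congr h; apply: functional_extensionality => x; by rewrite big_cons.
Qed.

Theorem lemma4p3 (K : comNzRingType) (A B : algType K) (iota : {lrmorphism B -> A})
  (M : zmodType) (tens : A -> A -> M) (lact : A -> M -> M) (ract : M -> B -> M)
  (Psi : M -> (A -> A) -> A) :
  is_tensor_BA iota tens ->
  left_A_action tens lact ->
  right_B_action iota tens ract ->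
  right_D2 iota lact ract ->
  (forall f, End_B iota f ->
     additive_map (fun t => Psi t f) /\
     forall a a', Psi (tens a a') f = a * f a') ->
  [/\ forall t, Hom_EA iota (Psi t),
      forall b t f, End_B iota f -> Psi (lact (iota b) t) f = iota b * Psi t f,
      forall t t', (forall f, End_B iota f -> Psi t f = Psi t' f) -> t = t',
      forall F, Hom_EA iota F -> exists t, forall f, End_B iota f -> Psi t f = F f
    & forall n (gamma : 'I_n -> A -> A) (u : 'I_n -> M),
        right_D2_quasibase iota tens lact ract gamma u ->
        (forall t, \sum_(j < n) lact (Psi t (gamma j)) (u j) = t) /\
        (forall F, Hom_EA iota F -> forall f, End_B iota f ->
           Psi (\sum_(j < n) lact (F (gamma j)) (u j)) f = F f)].
Proof.
move=> [[bal1 bal2 bal3] _ uniq] [ladd Hlt] _ HD2 HPsi.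
have PsiL : forall x t f, End_B iota f -> Psi (lact x t) f = x * Psi t f.
  move=> x t f Ef; have [Pa Pt] := HPsi f Ef.
  apply: (uniq A (fun t => Psi (lact x t) f) (fun t => x * Psi t f)).
  - by move=> t1 t2; rewrite ladd Pa.
  - by move=> t1 t2 /=; rewrite Pa mulrDr.
  - by move=> a a'; rewrite Hlt !Pt mulrA.
have lactD : forall x y m, lact (x + y) m = lact x m + lact y m.
  move=> x y; apply: (uniq M (lact (x + y)) (fun m => lact x m + lact y m)) => //.
  - by move=> t1 t2 /=; rewrite !ladd addrACA.
  - by move=> a a'; rewrite !Hlt mulrDl bal1.
have EBsum : forall (I : Type) (s : seq I) (G : I -> A -> A),
    (forall j, End_B iota (G j)) -> End_B iota (fun x => \sum_(j <- s) G j x).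
  move=> I s G HG; split.
    by move=> x y; rewrite -big_split; apply: eq_bigr => j _; rewrite (HG j).1.
  by move=> b x; rewrite mulr_sumr; apply: eq_bigr => j _; rewrite (HG j).2.
have EBmul : forall f c, End_B iota f -> End_B iota (fun x => f x * c).
  move=> f c Ef; split; first by move=> x y; rewrite Ef.1 mulrDl.
  by move=> b x; rewrite Ef.2 mulrA.
have EBadd : forall f g, End_B iota f -> End_B iota g -> End_B iota (fun x => f x + g x).
  move=> f g Ef Eg; split; first by move=> x y; rewrite Ef.1 Eg.1 addrACA.
  by move=> b x; rewrite Ef.2 Eg.2 mulrDr.
have Fsum : forall F, Hom_EA iota F -> forall (I : Type) (s : seq I) (G : I -> A -> A),
    (forall j, End_B iota (G j)) -> F (fun x => \sum_(j <- s) G j x) = \sum_(j <- s) F (G j).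
  move=> F [Fadd Fmul] I s G HG.
  have Eid : End_B iota (fun x : A => x) by split.
  elim: s => [|i s IH].
    have h0 : F (fun _ => 0) = 0.
      transitivity (F (fun x => x * 0)).
        by f_equal; apply: functional_extensionality => x; rewrite mulr0.
      by rewrite Fmul // mulr0.
    rewrite big_nil -h0.
    by f_equal; apply: functional_extensionality => x; rewrite big_nil.
  rewrite big_cons -IH -Fadd //; last exact: EBsum.
  by f_equal; apply: functional_extensionality => x; rewrite big_cons.
have QB : forall n (gamma : 'I_n -> A -> A) (u : 'I_n -> M),
    (forall j, End_B iota (gamma j)) ->
    (forall a a', tens a a' = \sum_(j < n) lact (a * gamma j a') (u j)) ->
    (forall t, \sum_(j < n) lact (Psi t (gamma j)) (u j) = t) /\
    (forall F, Hom_EA iota F -> forall f, End_B iota f ->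
           Psi (\sum_(j < n) lact (F (gamma j)) (u j)) f = F f).
  move=> n gamma u Eg Hq; split.
    apply: (uniq M (fun t => \sum_(j < n) lact (Psi t (gamma j)) (u j)) (fun t => t)).
    - move=> t1 t2; rewrite -big_split; apply: eq_bigr => j _.
      by rewrite (HPsi _ (Eg j)).1 lactD.
    - by [].
    - move=> a a'; rewrite [RHS](Hq a a'); apply: eq_bigr => j _.
      by rewrite (HPsi _ (Eg j)).2.
  move=> F HF f Ef.
  have [Pa Pt] := HPsi f Ef.
  rewrite (@addm_sum _ _ (fun t => Psi t f) _ _ _ Pa).
  rewrite (eq_bigr (fun j => F (gamma j) * Psi (u j) f)); last by move=> j _; rewrite PsiL.
  have Hf : f = (fun x => \sum_(j < n) (fun x => gamma j x * Psi (u j) f) x).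
    apply: functional_extensionality => x.
    have := Pt 1 x; rewrite mul1r => <-.
    rewrite (Hq 1 x) (@addm_sum _ _ (fun t => Psi t f) _ _ _ Pa).
    by apply: eq_bigr => j _; rewrite PsiL // mul1r.
  rewrite [in RHS]Hf (Fsum F HF); last by move=> j; apply: EBmul.
  by apply: eq_bigr => j _; rewrite HF.2.
have [n [gamma [u [Eg Hq]]]] : exists n (gamma : 'I_n -> A -> A) (u : 'I_n -> M),
    (forall j, End_B iota (gamma j)) /\
    (forall a a', tens a a' = \sum_(j < n) lact (a * gamma j a') (u j)).
  case: HD2 => n [i [p [[iadd ilact iract] [padd plact pract pinv]]]].
  exists n, (fun k a' => i (tens 1 a') k), (fun k => p (fun k' => (k' == k)%:R)).
  split.
    move=> k; split; first by move=> x y; rewrite bal2 iadd.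
    move=> b x.
    rewrite -bal3 mul1r -{1}[iota b]mulr1 -Hlt. by rewrite ilact.
  move=> a a'.
  rewrite (eq_bigr (fun k => p (fun k' => (a * i (tens 1 a') k) * (k' == k)%:R)));
    last by move=> k _; rewrite plact.
  rewrite -(@fun_sum _ _ _ p padd) -[LHS]pinv; f_equal.
  apply: functional_extensionality => k'.
  rewrite (bigD1 k') //= eqxx mulr1 big1 ?addr0; last first.
    by move=> k /negPf; rewrite eq_sym => ->; rewrite mulr0.
  by rewrite -ilact Hlt mulr1.
have [Q1 Q2] := QB n gamma u Eg Hq.
split.
- move=> t; split.
    move=> f g Ef Eg'.
    have [Pa Pt] := HPsi _ (EBadd f g Ef Eg').
    have [Pfa Pft] := HPsi _ Ef; have [Pga Pgt] := HPsi _ Eg'.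
    apply: (uniq A (fun t => Psi t (fun x => f x + g x)) (fun t => Psi t f + Psi t g)) => //.
    + by move=> t1 t2 /=; rewrite Pfa Pga addrACA.
    + by move=> a a'; rewrite Pt Pft Pgt mulrDr.
  move=> f c Ef.
  have [Pa Pt] := HPsi _ (EBmul f c Ef); have [Pfa Pft] := HPsi _ Ef.
  apply: (uniq A (fun t => Psi t (fun x => f x * c)) (fun t => Psi t f * c)) => //.
  + by move=> t1 t2 /=; rewrite Pfa mulrDl.
  + by move=> a a'; rewrite Pt Pft mulrA.
- by move=> b t f Ef; rewrite PsiL.
- move=> t t' H; rewrite -(Q1 t) -(Q1 t'); apply: eq_bigr => j _; by rewrite H.
- move=> F HF; exists (\sum_(j < n) lact (F (gamma j)) (u j)); exact: Q2.
- move=> m g v [EBB HT Hq']; apply: QB => //.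
  by move=> j; have [? ? _] := EBB j; split.
Qed.
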